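(* Let $\lambda_1,\ldots,\lambda_n\in\mathcal WP^+$, $\pi_\Lambda=\pi_{\lambda_1}\otimes\cdots\otimes\pi_{\lambda_n}$, $\pi_{\tilde\Lambda}=\pi_{\tilde\lambda_1}\otimes\cdots\otimes\pi_{\tilde\lambda_n}$, let $\mathbf i=(i_k,\ldots,i_1)$ be a sequence in $I$ with associated $\mathbf m=(m_k,\ldots,m_1)$, and put $\pi=F_{\mathbf i}\pi_\Lambda$, $\tilde\pi=F_{(\mathbf i,\mathbf m)}\pi_{\tilde\Lambda}$. For $1\le s\le k$ let $\mathbf i_{[s]}=(i_s,\ldots,i_1)$ and $(\mathbf i,\mathbf m)_{[s]}=((i_s,m_s),\ldots,(i_1,m_1))$. If $\pi\ne\mathbf0$, then $\tilde\pi\ne\mathbf0$, and moreover $$H_{i_s}^{F_{\mathbf i_{[s-1]}}\pi_\Lambda}(t)=\tilde H_{(i_s,m_s)}^{F_{(\mathbf i,\mathbf m)_{[s-1]}}\pi_{\tilde\Lambda}}(t)$$ for all $s=1,\ldots,k$ and $t\in[0,1]$ (with $F_{\mathbf i_{[0]}}$, $F_{(\mathbf i,\mathbf m)_{[0]}}$ the identity).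
   Context: $I$ countable, $A=(a_{ij})$ Borcherds–Cartan matrix ($a_{ii}=2$ or $a_{ii}\in\mathbb Z_{\le0}$; $a_{ij}\in\mathbb Z_{\le0}$, $i\ne j$; $a_{ij}=0\iff a_{ji}=0$), $I^{re}=\{a_{ii}=2\}$, $I^{im}=I\setminus I^{re}$, datum $(A,\{\alpha_i\},\{\alpha_i^\vee\},P,P^\vee)$, $\alpha_i^\vee(\alpha_j)=a_{ij}$, linearly independent simple roots/coroots, $P^+$ dominant integral weights. Monoid $\mathcal W$ generated by $r_i$ ($r_i(\mu)=\mu-\alpha_i^\vee(\mu)\alpha_i$) with $r_i^2=1$ (real), $(r_ir_j)^m=(r_jr_i)^m=1$ (real $i\ne j$, $\mathrm{ord}(r_ir_j)=m\in\{2,3,4,6\}$), $r_ir_j=r_jr_i$ ($i\in I^{im}$, $j\ne i$, $a_{ij}=0$), acting on $\mathfrak h^*$; $\mathcal WP^+=\{w\lambda:w\in\mathcal W,\lambda\in P^+\}$. Paths: piecewise-linear $\pi:[0,1]\to\mathfrak h^*_{\mathbb R}$ with $\pi(0)=0$, $\pi(1)\in P$; $\mathbf0$ an extra element. $H_i^\pi(t)=\alpha_i^\vee(\pi(t))$, $m_i^\pi=\min\{H_i^\pi(t)\in\mathbb Z\}$. Root operator $f_i$ ($f_i\mathbf 0=\mathbf0$): $f_+^i=\max\{t:H_i^\pi(t)=m_i^\pi\}$; if $f_+^i=1$, $f_i\pi=\mathbf0$; else $f_-^i=\min\{t\ge f_+^i:H_i^\pi(t)=m_i^\pi+1\}$ and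 $f_i\pi=\pi$ on $[0,f_+^i]$, $\pi-(H_i^\pi-m_i^\pi)\alpha_i$ on $[f_+^i,f_-^i]$, $\pi-\alpha_i$ on $[f_-^i,1]$. $F_{\mathbf i}=f_{i_k}\cdots f_{i_1}$. $\pi_\mu(t)=t\mu$; concatenation $(\pi_1\otimes\cdots\otimes\pi_n)(t)=\sum_{l<m}\pi_l(1)+\pi_m(nt-m+1)$ on $[\frac{m-1}n,\frac mn]$. Kac–Moody side: $\tilde I=\{(i,1)\}_{i\in I^{re}}\sqcup\{(i,m)\}_{i\in I^{im},m\ge1}$; $\tilde A$ with $2$ on the diagonal and $\tilde a_{(i,m),(j,n)}=a_{ij}$ otherwise; Cartan datum $(\tilde A,\{\tilde\alpha_{(i,m)}\},\{\tilde\alpha^\vee_{(i,m)}\},\tilde P,\tilde P^\vee)$; for $\mu\in\mathcal WP^+$ fixed $\tilde\mu\in\tilde P$ with $\tilde\alpha^\vee_{(i,m)}(\tilde\mu)=\alpha_i^\vee(\mu)$ for all $(i,m)$. For paths $\tilde\pi$ into $(\tilde{\mathfrak h}_{\mathbb R})^*$, $\tilde H_{(i,m)}^{\tilde\pi}(t)=\tilde\alpha^\vee_{(i,m)}(\tilde\pi(t))$, and root operators $f_{(i,m)}$ defined by the same formulas. $\mathbf m$ associated with $\mathbf i$: $m_s=1$ if $i_s\in I^{re}$, $m_s=\#\{t\le s:i_t=i_s\}$ if $i_s\in I^{im}$; $F_{(\mathbf i,\mathbf m)}=f_{(i_k,m_k)}\cdots f_{(i_1,m_1)}$. *)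

(* Defs.v *)
From HB Require Import structures.
From mathcomp Require Import all_boot all_order all_algebra.
From mathcomp Require Import boolp classical_sets reals.
Set Implicit Arguments. Unset Strict Implicit. Unset Printing Implicit Defensive.
Import Order.TTheory GRing.Theory Num.Theory.
Local Open Scope ring_scope.
Local Open Scope classical_set_scope.

Section Paths.
Variable R : realType.

(** Paths into a real vector space W; only values on [0,1] matter. *)
Definition rpath (W : lmodType R) := R -> W.

Definition is_linear_fun (W : lmodType R) (h : W -> R) :=
  forall (c : R) (u v : W), h (c *: u + v) = c * h u + h v.

(** The root operator f associated with a coroot h (a linear functional) and
    a root al; [None] stands for the extra element 0. *)
Definition Hfun (W : lmodType R) (h : W -> R) (p : rpath W) : R -> R :=
  fun t => h (p t).

Definition min_int (W : lmodType R) (h : W -> R) (p : rpath W) : R :=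
  inf [set x : R | exists t, 0 <= t <= 1 /\ Hfun h p t = x /\ x \is a Num.int].

Definition fplus (W : lmodType R) (h : W -> R) (p : rpath W) : R :=
  sup [set t : R | 0 <= t <= 1 /\ Hfun h p t = min_int h p].

Definition fminus (W : lmodType R) (h : W -> R) (p : rpath W) : R :=
  inf [set t : R | fplus h p <= t <= 1 /\ Hfun h p t = min_int h p + 1].

Definition root_op (W : lmodType R) (h : W -> R) (al : W) (p : rpath W)
  : option (rpath W) :=
  if fplus h p == 1 then None
  else Some (fun t =>
    if t <= fplus h p then p t
    else if t <= fminus h p then p t - (Hfun h p t - min_int h p) *: al
    else p t - al).

Definition root_opt (W : lmodType R) (h : W -> R) (al : W) (o : option (rpath W)) :=
  obind (root_op h al) o.

(** F_{(j_k,...,j_1)} with the sequence given in order of application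
    [:: j_1; ...; j_k] *)
Definition Fseq (J : Type) (W : lmodType R) (h : J -> W -> R) (al : J -> W)
  (js : seq J) (o : option (rpath W)) : option (rpath W) :=
  foldl (fun o j => root_opt (h j) (al j) o) o js.

Definition pi_line (W : lmodType R) (mu : W) : rpath W := fun t => t *: mu.

(** concatenation pi_1 (x) ... (x) pi_n : on [(m-1)/n, m/n] it is
    sum_{l<m} pi_l(1) + pi_m(n t - m + 1) (1-based m) *)
Definition concat_paths (W : lmodType R) (ps : seq (rpath W)) : rpath W :=
  fun t =>
    let n := size ps in
    let m := maxn 1 `|Num.ceil (n%:R * t)|%N in
    \sum_(l < m.-1) nth (fun _ => 0) ps l 1
    + nth (fun _ => 0) ps m.-1 (n%:R * t - m%:R + 1).

Definition refl (I : Type) (W : lmodType R) (cor : I -> W -> R) (al : I -> W)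
  (i : I) (mu : W) : W := mu - cor i mu *: al i.
End Paths.

Definition BC_matrix (I : Type) (a : I -> I -> int) : Prop :=
  (forall i, a i i = 2 \/ a i i <= 0)
  /\ (forall i j, i <> j -> a i j <= 0)
  /\ (forall i j, a i j = 0 <-> a j i = 0).

Definition is_real (I : Type) (a : I -> I -> int) (i : I) : bool := a i i == 2.

Definition tilde_index (I : Type) (a : I -> I -> int) (x : I * nat) : Prop :=
  if is_real a x.1 then x.2 = 1%N else (0 < x.2)%N.

Definition tilde_a (I : eqType) (a : I -> I -> int) (x y : I * nat) : int :=
  if x == y then 2 else a x.1 y.1.

Definition assoc_m (I : eqType) (a : I -> I -> int) (ix : seq I) : seq (I * nat) :=
  [seq (x.2, if is_real a x.2 then 1%N else count_mem x.2 (take x.1.+1 ix))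
  | x <- zip (iota 0 (size ix)) ix].

Section Datum.
Variable R : realType.

Definition lin_indep (J : eqType) (W : lmodType R) (ok : J -> Prop) (f : J -> W) :=
  forall (s : seq J) (c : J -> R), uniq s -> (forall j, j \in s -> ok j) ->
    \sum_(j <- s) c j *: f j = 0 -> forall j, j \in s -> c j = 0.

Definition lin_indep_fun (J : eqType) (W : lmodType R) (ok : J -> Prop)
  (f : J -> W -> R) :=
  forall (s : seq J) (c : J -> R), uniq s -> (forall j, j \in s -> ok j) ->
    (forall v, \sum_(j <- s) c j * f j v = 0) -> forall j, j \in s -> c j = 0.

(** A realization (A,{alpha_i},{alpha_i^vee},P,P^vee), with h*_R modelled by
    the real vector space W, coroots by linear functionals on W, and the weight
    lattice by an additive subgroup P of W (on which coroots are integral). *)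
Definition realization (J : eqType) (W : lmodType R) (ok : J -> Prop)
  (a : J -> J -> int) (al : J -> W) (cor : J -> W -> R) (P : set W) : Prop :=
  (forall j, is_linear_fun (cor j))
  /\ (forall i j, ok i -> ok j -> cor i (al j) = (a i j)%:~R)
  /\ lin_indep ok al /\ lin_indep_fun ok cor
  /\ P 0 /\ (forall u v, P u -> P v -> P (u - v))
  /\ (forall j, ok j -> P (al j))
  /\ (forall j mu, ok j -> P mu -> cor j mu \is a Num.int).

Definition dominant (I : Type) (W : lmodType R) (cor : I -> W -> R) (P : set W)
  (lam : W) : Prop := P lam /\ forall i, 0 <= cor i lam.

Definition WPplus (I : Type) (W : lmodType R) (cor : I -> W -> R) (al : I -> W)
  (P : set W) (mu : W) : Prop :=
  exists (w : seq I) (lam : W), dominant cor P lam /\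
    mu = foldr (refl cor al) lam w.
End Datum.

(* Main.v *)
Require Import Defs.
From HB Require Import structures.
From mathcomp Require Import all_boot all_order all_algebra.
From mathcomp Require Import boolp classical_sets reals.
Import Order.TTheory GRing.Theory Num.Theory.
Local Open Scope ring_scope.

Section Aux.
Variable R : realType.
Variable W : lmodType R.
Variable h : W -> R.
Hypothesis L : is_linear_fun h.

Lemma lin0 : h 0 = 0.
Proof.
have := L 1 0 0; rewrite scale1r addr0 mul1r.
move/(congr1 (fun z => z - h 0)) => /=; rewrite subrr addrK => <-. by [].
Qed.

Lemma linZ c u : h (c *: u) = c * h u.
Proof. by have := L c u 0; rewrite addr0 lin0 addr0. Qed.

Lemma linD u v : h (u + v) = h u + h v.
Proof. by have := L 1 u v; rewrite scale1r mul1r. Qed.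

Lemma linN u : h (- u) = - h u.
Proof. by have := L (-1) u 0; rewrite addr0 scaleN1r lin0 addr0 mulN1r. Qed.

Lemma linB u v : h (u - v) = h u - h v.
Proof. by rewrite linD linN. Qed.

Lemma linsum k (F : 'I_k -> W) : h (\sum_(l < k) F l) = \sum_(l < k) h (F l).
Proof.
elim: k F => [|k IH] F; first by rewrite !big_ord0 lin0.
by rewrite !big_ord_recr /= linD IH.
Qed.
End Aux.
Arguments lin0 {R W h}.
Arguments linZ {R W h}.
Arguments linD {R W h}.
Arguments linN {R W h}.
Arguments linB {R W h}.
Arguments linsum {R W h}.

Lemma mem_zip_iota (T : eqType) (n m k : nat) (y : T) (s : seq T) :
  (k, y) \in zip (iota m n) s -> (k < m + n)%N.
Proof.
elim: n m s => [|n IH] m [|y0 s] //=.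
rewrite in_cons => /orP [/eqP [-> _]|/IH]; first by rewrite addnS ltnS leq_addr.
by rewrite addSnnS.
Qed.

Lemma assoc_m_rcons (I : eqType) (a : I -> I -> int) s i :
  assoc_m a (rcons s i) =
  rcons (assoc_m a s) (i, if is_real a i then 1%N else (count_mem i s).+1).
Proof.
rewrite /assoc_m size_rcons.
have -> : iota 0 (size s).+1 = iota 0 (size s) ++ [:: size s] by rewrite -addn1 iotaD.
rewrite -!cats1 zip_cat ?size_iota //.
rewrite map_cat; congr (_ ++ _).
  apply/eq_in_map => -[k y] /= Hk.
  have Hk' := @mem_zip_iota _ _ _ _ _ _ Hk.
  by rewrite takel_cat.
rewrite /= take_oversize ?size_cat ?addn1 // count_cat /= eqxx addn0 addn1.
by [].
Qed.

Lemma size_assoc (I : eqType) (a : I -> I -> int) s : size (assoc_m a s) = size s.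
Proof. by rewrite /assoc_m size_map size_zip size_iota minnn. Qed.

Lemma take_assoc (I : eqType) (a : I -> I -> int) s t :
  take (size s) (assoc_m a (s ++ t)) = assoc_m a s.
Proof.
elim/last_ind: t => [|t x IH]; first by rewrite cats0 take_oversize ?size_assoc.
rewrite -rcons_cat assoc_m_rcons -cats1 takel_cat ?IH //.
by rewrite size_assoc size_cat leq_addr.
Qed.

Theorem lemma4p1p5
  (R : realType) (I : countType) (a : I -> I -> int)
  (V : lmodType R) (alpha : I -> V) (coroot : I -> V -> R) (P : set V)
  (Vt : lmodType R) (talpha : I * nat -> Vt) (tcoroot : I * nat -> Vt -> R)
  (Pt : set Vt)
  (lams : seq V) (tlams : seq Vt) (ix : seq I) :
  BC_matrix a ->
  realization (fun _ => True) a alpha coroot P ->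
  realization (tilde_index a) (tilde_a a) talpha tcoroot Pt ->
  size tlams = size lams ->
  (forall l, (l < size lams)%N ->
     WPplus coroot alpha P (nth 0 lams l)
     /\ Pt (nth 0 tlams l)
     /\ (forall x, tilde_index a x ->
           tcoroot x (nth 0 tlams l) = coroot x.1 (nth 0 lams l))) ->
  let piL := concat_paths [seq pi_line mu | mu <- lams] in
  let tpiL := concat_paths [seq pi_line mu | mu <- tlams] in
  let tis := assoc_m a ix in
  Fseq coroot alpha ix (Some piL) <> None ->
  Fseq tcoroot talpha tis (Some tpiL) <> None
  /\ (forall (pre : seq I) (i : I) (post : seq I), ix = pre ++ i :: post ->
      let m := if is_real a i then 1%N else (count_mem i pre).+1 in
      forall (p : rpath V) (tp : rpath Vt),
        Fseq coroot alpha pre (Some piL) = Some p ->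
        Fseq tcoroot talpha (take (size pre) tis) (Some tpiL) = Some tp ->
        forall t : R, 0 <= t <= 1 ->
          Hfun (coroot i) p t = Hfun (tcoroot (i, m)) tp t).
Proof.
move=> BC [Llin [Lal _]] [Tlin [Tal _]] Hsz Hl piL tpiL tis Hne.
have inv : forall pre p, Fseq coroot alpha pre (Some piL) = Some p ->
  exists tp, Fseq tcoroot talpha (assoc_m a pre) (Some tpiL) = Some tp /\
    forall x, tilde_index a x ->
      (is_real a x.1 || (count_mem x.1 pre < x.2)%N) ->
      forall t, tcoroot x (tp t) = coroot x.1 (p t).
  elim/last_ind => [|pre j IH] p.
    move=> [<-]; exists tpiL; split => // x Hx _ t.
    have Hk : forall l s, tcoroot x (nth (fun _ => 0) [seq pi_line mu | mu <- tlams] l s)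
        = coroot x.1 (nth (fun _ => 0) [seq pi_line mu | mu <- lams] l s).
      move=> l s; case: (ltnP l (size lams)) => Hl'.
        rewrite (nth_map 0) ?Hsz // (nth_map 0) // /pi_line.
        by rewrite (linZ (Tlin x)) (linZ (Llin x.1)) (Hl l Hl').2.2.
      by rewrite !nth_default ?size_map ?Hsz //= (lin0 (Tlin x)) (lin0 (Llin x.1)).
    rewrite /tpiL /piL /concat_paths /= !size_map Hsz.
    rewrite (linD (Tlin x)) (linD (Llin x.1)) (linsum (Tlin x)) (linsum (Llin x.1)).
    by congr (_ + _); [apply: eq_bigr => l _; apply: Hk | apply: Hk].
  rewrite /Fseq foldl_rcons.
  case E: (foldl _ _ pre) => [p0|] //=.
  have [tp [Etp Hinv]] := IH p0 E.
  rewrite assoc_m_rcons foldl_rcons.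
  move: Etp; rewrite /Fseq => -> /=.
  set m := if is_real a j then 1%N else (count_mem j pre).+1.
  have Hjm : tilde_index a (j, m) by rewrite /tilde_index /m /=; case: is_real.
  have EH : Hfun (coroot j) p0 = Hfun (tcoroot (j, m)) tp.
    apply: funext => t; rewrite /Hfun Hinv //=.
    by rewrite /m; case: is_real => //=; rewrite ltnSn.
  have Emin : min_int (coroot j) p0 = min_int (tcoroot (j, m)) tp by rewrite /min_int EH.
  have Efp : fplus (coroot j) p0 = fplus (tcoroot (j, m)) tp by rewrite /fplus EH Emin.
  have Efm : fminus (coroot j) p0 = fminus (tcoroot (j, m)) tp by rewrite /fminus Efp EH Emin.
  rewrite /root_op -Efp; case: ifP => // _ [<-].
  eexists; split; first reflexivity.
  move=> x Hx Hc t.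
  have Hc' : is_real a x.1 || (count_mem x.1 pre < x.2)%N.
    case/orP: Hc => [->//|H]; apply/orP; right; apply: leq_ltn_trans H.
    by rewrite -cats1 count_cat leq_addr.
  have key : tcoroot x (talpha (j, m)) = coroot x.1 (alpha j).
    rewrite Tal // Lal // /tilde_a; case: eqP => [Exj|//].
    move: Hc; rewrite Exj /= /m; case Hr: (is_real a j).
      by move: Hr; rewrite /is_real => /eqP ->.
    by rewrite -cats1 count_cat /= eqxx addn1 ltnn.
  rewrite -Efm -Emin -EH.
  case: ifP => _; first exact: Hinv.
  case: ifP => _.
    by rewrite (linB (Tlin x)) (linB (Llin x.1)) (linZ (Tlin x)) (linZ (Llin x.1)) Hinv // key.
  by rewrite (linB (Tlin x)) (linB (Llin x.1)) Hinv // key.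
split.
  move=> tnone; case E: (Fseq coroot alpha ix (Some piL)) => [p|]; last by [].
  have [tp [Etp _]] := inv _ _ E.
  by move: tnone; rewrite /tis Etp.
move=> pre i post Eix m p tp Ep Etp t _.
have [tp' [Etp' Hinv]] := inv _ _ Ep.
move: Etp; rewrite /tis Eix take_assoc Etp' => -[<-].
rewrite /Hfun Hinv //.
  by rewrite /tilde_index /m /=; case: is_real.
by rewrite /m /=; case: is_real => //=; rewrite ltnSn.
Qed.
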